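(* For any $\alpha\in(0,1)$, any $f\in\mathcal V_1$ and any $x>0$, $$c(f)\le\frac{1+2\alpha}{3(1-\alpha)}\,c_{1,\alpha}\,\big(1-f(x)\big)^{\min(1-\alpha,\alpha)}\big(1+x^{-2\alpha}\big).$$
   Context: Fix $\alpha\in(0,1)$ and set $c_{1,\alpha}=\frac{2^{2\alpha-1}\Gamma(\frac12+\alpha)}{\sqrt{\pi}\,\Gamma(1-\alpha)}$. Let $\rho(x)=(1+|x|)^{-\alpha}$ and $\mathcal V_0=\{f\in C(\mathbb{R}): f\text{ even},\ \|\rho f\|_{L^\infty}<\infty\}$. Let $\eta=2\left(\frac{3}{2(3-2\alpha)(5-2\alpha)(1+4^{\alpha})}\right)^{1/\min(\alpha,1-\alpha)}$. $\mathcal V_1$ is the set of $f\in\mathcal V_0$ such that $f(0)=1$; $f\ge0$ and $f$ is non-increasing on $[0,\infty)$; $x\mapsto f(\sqrt x)$ is convex on $[0,\infty)$; $f(x)\ge\max(0,1-x^2)$ for all $x$; and $f'_-(1/2)\le-\eta$. For $f\in\mathcal V_1$, $c(f)=\frac{2\alpha(1+2\alpha)}{3}c_{1,\alpha}\int_0^\infty\frac{1-f(\xi)}{\xi^{1+2\alpha}}\,d\xi$. *)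

(* Defs.v *)
From HB Require Import structures.
From mathcomp Require Import all_boot all_order all_algebra.
From mathcomp Require Import all_classical all_reals all_analysis.
Set Implicit Arguments. Unset Strict Implicit. Unset Printing Implicit Defensive.
Import Order.TTheory GRing.Theory Num.Theory.
Import numFieldNormedType.Exports.
Local Open Scope classical_set_scope.
Local Open Scope ring_scope.

Section Defs.
Variable R : realType.

(* Euler Gamma function Γ(s) = ∫_0^∞ t^(s-1) e^(-t) dt (Lebesgue integral);
   only used for s > 0, where the integral is finite. *)
Definition Gamma (s : R) : R :=
  fine (\int[lebesgue_measure]_(t in `]0%R, +oo[) ((t `^ (s - 1)) * expR (- t))%:E)%E.

Definition c1 (a : R) : R :=
  2 `^ (2 * a - 1) * Gamma (2^-1 + a) / (Num.sqrt pi * Gamma (1 - a)).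

Definition rho (a : R) (x : R) : R := (1 + `|x|) `^ (- a).

Definition eta (a : R) : R :=
  2 * (3 / (2 * (3 - 2 * a) * (5 - 2 * a) * (1 + 4 `^ a)))
        `^ (1 / Num.min a (1 - a)).

Definition V0 (a : R) (f : R -> R) : Prop :=
  continuous f /\ (forall x, f (- x) = f x) /\
  exists M : R, forall x, `|rho a x * f x| <= M.

Definition V1 (a : R) (f : R -> R) : Prop :=
  V0 a f /\
  [/\ f 0 = 1,
      ((forall x, 0 <= f x) /\ (forall x y, 0 <= x -> x <= y -> f y <= f x)),
      convex_function (`[0%R, +oo[%classic : set R^o) (fun x : R^o => f (Num.sqrt x) : R^o),
      (forall x, Num.max 0 (1 - x ^+ 2) <= f x) &
      (exists L : R,
        (fun h : R => (f (2^-1 + h) - f 2^-1) / h) @ 0^'- --> L /\ L <= - eta a)].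

(* c(f), as an extended real (it is finite for f in V_1) *)
Definition cf (a : R) (f : R -> R) : \bar R :=
  ((2 * a * (1 + 2 * a) / 3 * c1 a)%:E *
   \int[lebesgue_measure]_(xi in `]0%R, +oo[)
      ((1 - f xi) / xi `^ (1 + 2 * a))%:E)%E.

End Defs.

(* Main.v *)
Require Import Defs.
From HB Require Import structures.
From mathcomp Require Import all_boot all_order all_algebra.
From mathcomp Require Import all_classical all_reals all_analysis.
From mathcomp Require Import measurable_realfun.
From mathcomp.algebra_tactics Require Import ring lra.
Import Order.TTheory GRing.Theory Num.Theory.
Import numFieldNormedType.Exports.
Local Open Scope classical_set_scope.
Local Open Scope ring_scope.

Section H.
Variable R : realType.
Local Notation mu := (@lebesgue_measure R).

Lemma powR_cont (p x : R) : 0 < x -> {for x, continuous (fun y : R => y `^ p)}.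
Proof.
move=> x0; apply: differentiable_continuous; apply/derivable1_diffP.
by apply: derivable_powR; rewrite in_itv /= x0.
Qed.

Lemma powR_cvgy0 (q : R) : 0 < q -> (fun y : R => y `^ (- q)) @ +oo --> 0.
Proof.
move=> q0; apply/cvgrPdist_le => e e0.
set M := e `^ (- q^-1).
have M0 : 0 < M by rewrite powR_gt0.
near=> y.
have yM : M <= y by near: y; apply: nbhs_pinfty_ge; rewrite num_real.
have y0 : 0 < y by apply: lt_le_trans yM.
rewrite sub0r normrN ger0_norm ?powR_ge0// powRN.
have -> : e = (M `^ q)^-1.
  by rewrite /M -powRrM mulNr mulVf ?gt_eqF// powR_inv1 ?invrK// ltW.
rewrite lef_pV2 ?posrE ?powR_gt0//.
by apply: ge0_ler_powR => //; rewrite ?ltW// nnegrE ltW.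
Unshelve. all: by end_near. Qed.


Lemma isd_kpow (k p y : R) : 0 < y ->
  is_derive y 1 (fun z : R => k * z `^ p) (k * (p * y `^ (p - 1))).
Proof.
move=> y0; have := is_deriveZ k (is_derive1_powR p y0).
by [].
Qed.

Lemma d1_kpow (k p y : R) : 0 < y ->
  ((fun z : R => k * z `^ p)^`())%classic y = k * (p * y `^ (p - 1)).
Proof. by move=> y0; rewrite derive1E; apply: derive_val; apply: isd_kpow. Qed.

Lemma int_tail (k b q : R) : 0 <= k -> 0 < b -> 0 < q ->
  (\int[mu]_(y in `[b, +oo[) (k * y `^ (-1 - q))%:E = (k * b `^ (- q) / q)%:E)%E.
Proof.
move=> k0 b0 q0.
rewrite (@ge0_continuous_FTC2y R (fun y => k * y `^ (-1 - q))
   (fun z => (- k / q) * z `^ (- q)) b 0).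
- rewrite sub0e -EFinN; congr (_%:E).
  by rewrite !mulNr opprK mulrAC.
- by move=> y _; rewrite mulr_ge0 ?powR_ge0.
- apply/continuous_within_itvcyP; split.
  + move=> y; rewrite in_itv /= andbT => by0.
    by apply: cvgM; [exact: cvg_cst|apply: powR_cont; apply: lt_trans by0].
  + apply: cvg_at_right_filter.
    by apply: cvgM; [exact: cvg_cst|apply: powR_cont].
- rewrite -(mulr0 (- k / q)); apply: cvgM; first exact: cvg_cst.
  exact: powR_cvgy0.
- move=> y by0; apply: ex_derive; apply: isd_kpow; exact: lt_trans by0.
- apply: cvg_at_right_filter.
  by apply: cvgM; [exact: cvg_cst|apply: powR_cont].
- move=> y; rewrite in_itv /= andbT => by0.
  rewrite d1_kpow; last exact: lt_trans by0.
  rewrite mulrA mulNr mulrNN divfK ?gt_eqF//; congr (k * _ `^ _).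
  by rewrite addrC.
Qed.

Lemma int_seg (k c b p : R) : 0 <= k -> 0 < c -> c < b -> -1 < p ->
  (\int[mu]_(y in `[c, b]) (k * y `^ p)%:E <= (k * b `^ (p + 1) / (p + 1))%:E)%E.
Proof.
move=> k0 c0 cb p1.
have p10 : 0 < p + 1 by rewrite -ltrBlDr sub0r.
rewrite (@continuous_FTC2 R (fun y => k * y `^ p)
   (fun z => (k / (p + 1)) * z `^ (p + 1)) c b cb).
- rewrite -EFinB lee_fin mulrAC lerBlDr lerDl.
  by rewrite mulr_ge0 ?powR_ge0// divr_ge0// ltW.
- apply/continuous_within_itvP => //; split.
  + move=> y; rewrite in_itv /= => /andP[cy _].
    by apply: cvgM; [exact: cvg_cst|apply: powR_cont; apply: lt_trans cy].
  + apply: cvg_at_right_filter.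
    by apply: cvgM; [exact: cvg_cst|apply: powR_cont].
  + apply: cvg_at_left_filter.
    by apply: cvgM; [exact: cvg_cst|apply: powR_cont; apply: lt_trans cb].
- split.
  + move=> y; rewrite in_itv /= => /andP[cy _].
    apply: ex_derive; apply: isd_kpow; exact: lt_trans cy.
  + apply: cvg_at_right_filter.
    by apply: cvgM; [exact: cvg_cst|apply: powR_cont].
  + apply: cvg_at_left_filter.
    by apply: cvgM; [exact: cvg_cst|apply: powR_cont; apply: lt_trans cb].
- move=> y; rewrite in_itv /= => /andP[cy _].
  rewrite d1_kpow; last exact: lt_trans cy.
  rewrite addrK mulrA divfK ?gt_eqF//.
Qed.


Lemma int_head (k b p : R) : 0 <= k -> 0 < b -> -1 < p ->
  (\int[mu]_(y in `]0%R, b]) (k * y `^ p)%:E <= (k * b `^ (p + 1) / (p + 1))%:E)%E.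
Proof.
move=> k0 b0 p1.
pose c (n : nat) : R := b / n.+1%:R.
have c0 n : 0 < c n by rewrite divr_gt0.
have cb n : c n <= b.
  by rewrite ler_pdivrMr// ler_peMr ?(ltW b0)// ler1n.
pose A n := `[c n, +oo[%classic : set R.
pose g (n : nat) (y : R) := (k * y `^ p * \1_(A n) y)%:E.
have mD : measurable (`]0%R, b]%classic : set R) by [].
have mg n : measurable_fun `]0%R, b]%classic (g n).
  apply/measurable_EFinP; apply: measurable_funM.
    by apply: measurable_funM => //; exact: measurable_funTS (measurable_powR _).
  by apply: (@measurable_indic _ _ R); rewrite /A.
have g0 n y : `]0%R, b]%classic y -> (0 <= g n y)%E.
  by move=> _; rewrite lee_fin !mulr_ge0 ?powR_ge0.
have ndg y : `]0%R, b]%classic y -> nondecreasing_seq (g^~ y).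
  move=> _ m n mn; rewrite lee_fin ler_wpM2l ?mulr_ge0 ?powR_ge0//.
  rewrite /indic; have [H|] := boolP (y \in A m); last by rewrite ler0n.
  suff -> : y \in A n by [].
  move: H; rewrite /A !inE /= !in_itv /= !andbT; apply: le_trans.
  by rewrite /c ler_pM2l// lef_pV2 ?posrE ?ltr0n// ler_nat.
have H := @cvg_monotone_convergence _ _ R mu _ mD g mg g0 ndg.
rewrite (@eq_integral _ _ _ mu _ (fun y => limn (g^~ y))); last first.
  move=> y; rewrite inE /= in_itv /= => /andP[y0 yb].
  apply/esym/lim_near_cst => //.
  near=> n.
  rewrite /g /indic (_ : y \in A n = true) ?mulr1//.
  apply/idP; rewrite /A inE /= in_itv /= andbT /c.
  rewrite ler_pdivrMr// -ler_pdivrMl//.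
  apply: le_trans (_ : n%:R <= _); last by rewrite ler_nat.
  by near: n; exact: nbhs_infty_ger.
rewrite -(cvg_lim _ H) //; apply: lime_le; first exact: cvgP H.
apply: nearW => n.
have -> : (\int[mu]_(y in `]0%R, b]) g n y =
    \int[mu]_(y in (`]0%R, b] `&` A n)%classic) (k * y `^ p)%:E)%E.
  rewrite integral_mkcondr; apply: eq_integral => y _.
  by rewrite /g /patch /indic; case: (y \in A n); rewrite ?mulr1 ?mulr0.
have -> : (`]0%R, b] `&` A n)%classic = `[c n, b]%classic.
  apply/seteqP; split => y /=; rewrite /A !in_itv /= ?andbT.
    by move=> [/andP[_ ->]]; rewrite in_itv /= andbT => ->.
  move=> /andP[cy yb]; split; last by rewrite in_itv /= cy.
  by rewrite yb andbT (lt_le_trans _ cy).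
have [cnb|] := ltP (c n) b; first exact: int_seg.
rewrite le_eqVlt => /predU1P[bc|bc]; last by move: (cb n); rewrite leNgt bc.
rewrite bc set_itv1 integral_set1 lee_fin.
have p10 : 0 < p + 1 by rewrite -ltrBlDr sub0r.
by rewrite divr_ge0 ?mulr_ge0 ?powR_ge0// ltW.
Unshelve. all: by end_near. Qed.


Lemma split_itv (g : R -> \bar R) (c d : R) : c <= d ->
  measurable_fun `]c, +oo[%classic g -> (forall y, c < y -> (0 <= g y)%E) ->
  (\int[mu]_(y in `]c, +oo[) g y =
   \int[mu]_(y in `]c, d]) g y + \int[mu]_(y in `]d, +oo[) g y)%E.
Proof.
move=> cd mg g0.
rewrite (@itv_bndbnd_setU _ _ (BRight c) (BRight d) +oo%O) ?bnd_simp//.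
apply: ge0_integral_setU => //.
- by rewrite -itv_bndbnd_setU ?bnd_simp.
- by move=> y; rewrite -itv_bndbnd_setU ?bnd_simp//= in_itv /= andbT; apply: g0.
- rewrite disj_set2E; apply/eqP/seteqP; split => z //=.
  by rewrite !in_itv /= andbT => -[/andP[_ zd] dz]; move: (lt_le_trans dz zd); rewrite ltxx.
Qed.

Lemma piece (g : R -> \bar R) (h : R -> R) (D E : set R) :
  measurable D -> measurable E -> D `<=` E ->
  measurable_fun D g -> (forall y, D y -> (0 <= g y)%E) ->
  (forall y, D y -> (g y <= (h y)%:E)%E) ->
  measurable_fun E h -> (forall y, E y -> 0 <= h y) ->
  (\int[mu]_(y in D) g y <= \int[mu]_(y in E) (h y)%:E)%E.
Proof.
move=> mD mE DE mg g0 gh mh h0.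
apply: (@le_trans _ _ (\int[mu]_(y in D) (h y)%:E)%E).
  apply: ge0_le_integral => //.
  apply/measurable_EFinP; apply: measurable_funS mh => //.
apply: ge0_subset_integral => //; first exact/measurable_EFinP.
Qed.

End H.
Section M.
Variable R : realType.

Lemma mk01 (t : R) : 0 <= t -> t <= 1 -> {p : {i01 R} | p%:inum = t}.
Proof.
move=> t0 t1.
have h : Itv.num_sem `[0%Z, 1%Z] t.
  by rewrite /Itv.num_sem /= in_itv /= t0 t1 ger0_real.
by exists (@Itv.Def _ (@Itv.num_sem R) (Itv.Real `[0%Z, 1%Z]) t h).
Qed.

Lemma facts (a : R) (f : R -> R) (x : R) : V1 a f -> 0 < x ->
  [/\ forall y, 0 <= y -> 0 <= 1 - f y <= 1,
      forall y, 1 - f y <= y ^+ 2,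
      forall y, 0 <= y <= x -> 1 - f y <= 1 - f x,
      forall y, x <= y -> x ^+ 2 * (1 - f y) <= (1 - f x) * y ^+ 2 &
      continuous f].
Proof.
case=> [[fc _]] [f0 [fge0 fmono] fconv flow _] x0.
have f1 y : 0 <= y -> f y <= 1 by move=> y0; rewrite -f0; apply: fmono.
split => //.
- by move=> y y0; have := f1 y y0; have := fge0 y; lra.
- by move=> y; have := flow y; rewrite ge_max => /andP[_]; lra.
- by move=> y /andP[y0 yx]; have := fmono _ _ y0 yx; lra.
move=> y xy.
have y0 : 0 < y by apply: lt_le_trans xy.
have t1 : x ^+ 2 / y ^+ 2 <= 1.
  by rewrite ler_pdivrMr ?exprn_gt0// mul1r; nra.
have [t tE] := @mk01 (x ^+ 2 / y ^+ 2) (divr_ge0 (sqr_ge0 _) (sqr_ge0 _)) t1.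
have := fconv t (y ^+ 2) 0.
rewrite !inE /= !in_itv /= sqr_ge0 lexx => /(_ isT isT).
set u := (X in f (Num.sqrt X) <= _).
have -> : u = x ^+ 2.
  rewrite /u; change (t%:inum * y ^+ 2 + (1 - t%:inum) * 0 = x ^+ 2).
  by rewrite mulr0 addr0 tE divfK ?sqrf_eq0 ?gt_eqF.
rewrite convRE tE !sqrtr_sqr sqrtr0 f0 !gtr0_norm// /unstable.onem.
move=> h.
have : x ^+ 2 / y ^+ 2 * (1 - f y) <= 1 - f x by lra.
by rewrite mulrAC ler_pdivrMr ?exprn_gt0.
Qed.
End M.
Section M.
Variable R : realType.

Lemma pE (z e : R) : 0 < z -> z `^ e = expR (e * ln z).
Proof. by move=> z0; rewrite /powR gt_eqF. Qed.

Lemma alg (a d x : R) : 0 < a < 1 -> 0 < d -> 0 < x ->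
  1 * (d `^ 2^-1) `^ (1 - 2 * a + 1) / (1 - 2 * a + 1) +
  (d * (d `^ 2^-1) `^ (- (2 * a)) / (2 * a) +
  (d / x ^+ 2 * (x * d `^ (- 2^-1)) `^ (1 - 2 * a + 1) / (1 - 2 * a + 1) +
   1 * (x * d `^ (- 2^-1)) `^ (- (2 * a)) / (2 * a)))
  <= (d `^ (1 - a) + x `^ (- (2 * a)) * d `^ a) / (2 * a * (1 - a)).
Proof.
move=> /andP[a0 a1] d0 x0.
have s0 : 0 < d `^ 2^-1 by rewrite powR_gt0.
have y0 : 0 < x * d `^ (- 2^-1) by rewrite mulr_gt0 ?powR_gt0.
rewrite !(pE _ _ s0) !(pE _ _ y0).
rewrite ln_powR lnM ?posrE ?powR_gt0// ln_powR.
rewrite !(pE _ _ d0) !(pE _ _ x0).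
set L := ln d; set X := ln x.
have dE : d = expR L by rewrite /L lnK ?posrE.
have xE : x ^+ 2 = expR (X + X) by rewrite /X expRD lnK ?posrE// expr2.
rewrite [X in X * expR (- (2 * a) * _)]dE xE -expRN.
have e2 : expR L * expR (- (2 * a) * (2^-1 * L)) = expR ((1 - a) * L).
  by rewrite -expRD; congr expR; field.
have e3 : d * expR (- (X + X)) * expR ((1 - 2 * a + 1) * (X + - 2^-1 * L)) =
    expR (- (2 * a) * X) * expR (a * L).
  by rewrite dE -!expRD; congr expR; field.
have e1 : expR ((1 - 2 * a + 1) * (2^-1 * L)) = expR ((1 - a) * L).
  by congr expR; field.
have e4 : expR (- (2 * a) * (X + - 2^-1 * L)) = expR (- (2 * a) * X) * expR (a * L).
  by rewrite -expRD; congr expR; field.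
rewrite e2 e3 e1 e4 le_eqVlt; apply/orP; left; apply/eqP.
have h1 : 2 * a != 0 by rewrite mulf_neq0 ?gt_eqF.
have h2 : 1 - 2 * a + 1 != 0 by rewrite gt_eqF//; lra.
have h3 : 1 - a != 0 by rewrite gt_eqF//; lra.
field.
by rewrite h3 h2 gt_eqF.
Qed.
End M.
Section M3.
Variable R : realType.
Local Notation mu := (@lebesgue_measure R).

Lemma main_int (a : R) (f : R -> R) (x : R) : 0 < a < 1 -> V1 a f -> 0 < x ->
  (\int[mu]_(xi in `]0%R, +oo[) ((1 - f xi) / xi `^ (1 + 2 * a))%:E <=
   (((1 - f x) `^ (1 - a) + x `^ (- (2 * a)) * (1 - f x) `^ a)
      / (2 * a * (1 - a)))%:E)%E.
Proof.
move=> ha hf x0; have /andP[a0 a1] := ha.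
have [h01 P1 P2 P3 fc] := @facts R _ _ _ hf x0.
set d := 1 - f x.
have /andP[d0 d1] : 0 <= d <= 1 := h01 x (ltW x0).
pose g := fun xi : R => (1 - f xi) / xi `^ (1 + 2 * a).
have mg : measurable_fun setT g.
  rewrite (_ : g = (fun xi => (1 - f xi) * xi `^ (- (1 + 2 * a)))); last first.
    by apply/funext => xi; rewrite /g powRN.
  apply: measurable_funM; last exact: measurable_powR.
  apply: measurable_funB; first exact: measurable_cst.
  exact: continuous_measurable_fun.
have mG : measurable_fun setT (EFin \o g) by exact/measurable_EFinP.
have g0 xi : 0 < xi -> 0 <= g xi.
  by move=> xi0; rewrite divr_ge0 ?powR_ge0//; case/andP: (h01 xi (ltW xi0)).
have Pw xi : 0 < xi -> xi `^ (1 - 2 * a) * xi `^ (1 + 2 * a) = xi ^+ 2.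
  move=> xi0; rewrite -powRD; last by apply/implyP => _; rewrite gt_eqF.
  have -> : 1 - 2 * a + (1 + 2 * a) = 2%:R by ring.
  by rewrite powR_mulrn // ltW.
have Pn xi : xi `^ (-1 - 2 * a) = (xi `^ (1 + 2 * a))^-1.
  by rewrite -powRN opprD.
have gxi xi : 0 < xi -> 1 - f xi <= 0 -> g xi = 0.
  move=> xi0 h; have /andP[h0 _] := h01 xi (ltW xi0).
  have e : 1 - f xi = 0 by apply/le_anti; rewrite h h0.
  by rewrite /g e mul0r.
have [dz|dpos] : d = 0 \/ 0 < d.
  by move: d0; rewrite le_eqVlt => /predU1P[<-|]; [left|right].
  have -> : (d `^ (1 - a) + x `^ (- (2 * a)) * d `^ a) = 0.
    by rewrite dz !powR0 ?mulr0 ?addr0// gt_eqF// subr_gt0.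
  rewrite mul0r integral0_eq// => xi; rewrite /= in_itv /= andbT => xi0.
  have hle : 1 - f xi <= 0.
    have [xix|xxi] := leP xi x.
      by have := P2 xi; rewrite -/d dz; apply; rewrite ltW.
    have := P3 xi (ltW xxi); rewrite -/d dz mul0r.
    by rewrite pmulr_rle0// exprn_gt0.
  by have := gxi xi xi0 hle; rewrite /g => ->.
set s := d `^ 2^-1; set y := x * d `^ (- 2^-1).
have s0 : 0 < s by rewrite powR_gt0.
have y0 : 0 < y by rewrite mulr_gt0 ?powR_gt0.
have s1 : s <= 1.
  have -> : (1 : R) = 1 `^ 2^-1 by rewrite powR1.
  by rewrite /s; apply: ge0_ler_powR => //; rewrite ?nnegrE.
have sx : s <= x.
  have dx : d <= x ^+ 2 by apply: P1.
  have -> : x = (x ^+ 2) `^ 2^-1 by rewrite powR12_sqrt ?sqr_ge0// sqrtr_sqr gtr0_norm.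
  by apply: ge0_ler_powR; rewrite ?nnegrE ?sqr_ge0.
have xy : x <= y.
  rewrite /y; apply: ler_peMr; first exact: ltW.
  by rewrite powRN -/s invf_ge1.
have G0 c : 0 <= c -> forall xi, c < xi -> (0 <= (EFin \o g) xi)%E.
  by move=> c0 xi cxi; rewrite lee_fin g0// (le_lt_trans c0).
change (\int[mu]_(xi in `]0%R, +oo[) (EFin \o g) xi <=
  ((d `^ (1 - a) + x `^ (- (2 * a)) * d `^ a) / (2 * a * (1 - a)))%:E)%E.
rewrite (@split_itv R (EFin \o g) 0 s (ltW s0) (measurable_funTS mG) (G0 _ (lexx 0))).
rewrite (@split_itv R (EFin \o g) s x sx (measurable_funTS mG) (G0 _ (ltW s0))).
rewrite (@split_itv R (EFin \o g) x y xy (measurable_funTS mG) (G0 _ (ltW x0))).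
have mh k p : measurable_fun setT (fun z : R => k * z `^ p).
  by apply: measurable_funM; [exact: measurable_cst|exact: measurable_powR].
have K1 : (\int[mu]_(xi in `]0%R, s]) (EFin \o g) xi <=
    (1 * s `^ (1 - 2 * a + 1) / (1 - 2 * a + 1))%:E)%E.
  apply: le_trans (@int_head R 1 s (1 - 2 * a) ler01 s0 _); last by lra.
  apply: piece => //.
  - exact: measurable_funTS mG.
  - by move=> xi; rewrite /= in_itv /= => /andP[xi0 _]; apply: G0 (lexx 0) _ _.
  - move=> xi; rewrite /= in_itv /= => /andP[xi0 xis].
    rewrite lee_fin mul1r /= /g ler_pdivrMr ?powR_gt0// Pw//.
  - exact: measurable_funTS (mh _ _).
  - by move=> xi _; rewrite mul1r powR_ge0.
have K2 : (\int[mu]_(xi in `]s, x]) (EFin \o g) xi <=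
    (d * s `^ (- (2 * a)) / (2 * a))%:E)%E.
  rewrite -(@int_tail R d s (2 * a) d0 s0); last by rewrite mulr_gt0.
  apply: piece => //.
  - by move=> xi; rewrite /= !in_itv /= andbT => /andP[/ltW].
  - exact: measurable_funTS mG.
  - by move=> xi; rewrite /= in_itv /= => /andP[sxi _]; apply: G0 (ltW s0) _ _.
  - move=> xi; rewrite /= in_itv /= => /andP[sxi xix].
    have xi0 : 0 < xi by apply: lt_trans sxi.
    rewrite lee_fin /= /g Pn ler_wpM2r ?invr_ge0 ?powR_ge0//.
    by have := P2 xi; rewrite -/d; apply; rewrite (ltW xi0).
  - exact: measurable_funTS (mh _ _).
  - by move=> xi _; rewrite mulr_ge0 ?powR_ge0.
have K3 : (\int[mu]_(xi in `]x, y]) (EFin \o g) xi <=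
    (d / x ^+ 2 * y `^ (1 - 2 * a + 1) / (1 - 2 * a + 1))%:E)%E.
  apply: le_trans (@int_head R (d / x ^+ 2) y (1 - 2 * a) _ y0 _); last 2 first.
  - by rewrite divr_ge0 ?sqr_ge0.
  - by lra.
  apply: piece => //.
  - by move=> xi; rewrite /= !in_itv /= => /andP[xxi ->]; rewrite (lt_trans x0).
  - exact: measurable_funTS mG.
  - by move=> xi; rewrite /= in_itv /= => /andP[sxi _]; apply: G0 (ltW x0) _ _.
  - move=> xi; rewrite /= in_itv /= => /andP[xxi xiy].
    have xi0 : 0 < xi by apply: lt_trans xxi.
    rewrite lee_fin /= /g ler_pdivrMr ?powR_gt0// -mulrA Pw//.
    rewrite mulrAC ler_pdivlMr ?exprn_gt0// mulrC.
    by have := P3 xi (ltW xxi); rewrite -/d.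
  - exact: measurable_funTS (mh _ _).
  - by move=> xi _; rewrite mulr_ge0 ?powR_ge0 ?divr_ge0 ?sqr_ge0.
have K4 : (\int[mu]_(xi in `]y, +oo[) (EFin \o g) xi <=
    (1 * y `^ (- (2 * a)) / (2 * a))%:E)%E.
  rewrite -(@int_tail R 1 y (2 * a) ler01 y0); last by rewrite mulr_gt0.
  apply: piece => //.
  - by move=> xi; rewrite /= !in_itv /= !andbT => /ltW.
  - exact: measurable_funTS mG.
  - by move=> xi; rewrite /= in_itv /= andbT => yxi; apply: G0 (ltW y0) _ _.
  - move=> xi; rewrite /= in_itv /= andbT => yxi.
    have xi0 : 0 < xi by apply: lt_trans yxi.
    rewrite lee_fin /= /g Pn mul1r ler_pdivrMr ?powR_gt0// mulVf ?gt_eqF ?powR_gt0//.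
    by have /andP[] := h01 xi (ltW xi0).
  - exact: measurable_funTS (mh _ _).
  - by move=> xi _; rewrite mulr_ge0 ?powR_ge0.
apply: le_trans (leeD K1 (leeD K2 (leeD K3 K4))) _.
rewrite -!EFinD lee_fin.
exact: (@alg R a d x ha dpos x0).
Qed.
End M3.

Section Fin.
Variable R : realType.
Local Notation mu := (@lebesgue_measure R).

Lemma powR_mono01 (d e m : R) : 0 <= d <= 1 -> 0 < m -> m <= e -> d `^ e <= d `^ m.
Proof.
move=> /andP[d0 d1] m0 me.
have [dz|dp] : d = 0 \/ 0 < d.
  by move: d0; rewrite le_eqVlt => /predU1P[<-|]; [left|right].
  by rewrite dz !powR0 ?gt_eqF// (lt_le_trans m0).
by apply: ger_powR => //; rewrite dp.
Qed.

Lemma c1_ge0 (a : R) : 0 <= c1 a.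
Proof.
rewrite /c1 divr_ge0 ?mulr_ge0 ?powR_ge0 ?sqrtr_ge0//.
  by rewrite /Gamma fine_ge0// integral_ge0// => t _; rewrite lee_fin mulr_ge0 ?powR_ge0 ?expR_ge0.
by rewrite /Gamma fine_ge0// integral_ge0// => t _; rewrite lee_fin mulr_ge0 ?powR_ge0 ?expR_ge0.
Qed.

End Fin.

Theorem mainTheorem4 (R : realType) (a : R) (ha : 0 < a < 1)
  (f : R -> R) (hf : V1 a f) (x : R) (hx : 0 < x) :
  (cf a f <=
   ((1 + 2 * a) / (3 * (1 - a)) * c1 a
     * (1 - f x) `^ (Num.min (1 - a) a) * (1 + x `^ (- (2 * a))))%:E)%E.
Proof.
have /andP[a0 a1] := ha.
have C0 := @c1_ge0 R a.
have K0 : 0 <= 2 * a * (1 + 2 * a) / 3 * c1 a.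
  apply: mulr_ge0 C0; apply: divr_ge0 => //; apply: mulr_ge0; lra.
rewrite /cf.
apply: le_trans (lee_wpmul2l _ (@main_int R a f x ha hf hx)) _.
  by rewrite lee_fin.
rewrite -EFinM lee_fin.
have [h01 _ _ _ _] := @facts R _ _ _ hf hx.
have d01 := h01 x (ltW hx).
set d := 1 - f x; set C := c1 a; set Z := x `^ (- (2 * a)).
set m := Num.min (1 - a) a.
have m0 : 0 < m by rewrite lt_min; apply/andP; split; lra.
have P1 : d `^ (1 - a) <= d `^ m by apply: powR_mono01 => //; rewrite ge_min lexx.
have Q1 : d `^ a <= d `^ m by apply: powR_mono01 => //; rewrite ge_min lexx orbT.
have Z0 : 0 <= Z by rewrite powR_ge0.
have P0 : 0 <= d `^ (1 - a) by rewrite powR_ge0.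
have Q0 : 0 <= d `^ a by rewrite powR_ge0.
have e : 2 * a * (1 + 2 * a) / 3 * C * ((d `^ (1 - a) + Z * d `^ a) / (2 * a * (1 - a)))
   = (1 + 2 * a) / (3 * (1 - a)) * C * (d `^ (1 - a) + Z * d `^ a).
  by field; rewrite !gt_eqF ?subr_gt0.
rewrite e -[X in _ <= X]mulrA; apply: ler_wpM2l.
  apply: mulr_ge0 => //; apply: divr_ge0; first lra.
  by apply: mulr_ge0; lra.
nra.
Qed.
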